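(* Let $\{(x^r,z^r,\lambda^r)\}_{r\ge 0}$ be generated by Algorithm PGC (described in the context). Then there exist vectors $\zeta^r\in\mathbb{R}^{MN}$, $r\ge 1$, whose $i$-th $M$-dimensional blocks satisfy $\zeta^{r}_i\in\partial h_i(x^{r}_i)$ for all $i\in\mathcal{V}$, such that for all $r\ge 1$ $$x^{r+1}-x^r+\Upsilon^{-1}(\zeta^{r+1}-\zeta^r)=\Upsilon^{-1}\big(-G(x^r)+G(x^{r-1})\big)+(W\otimes I_M)x^r-\tfrac12\big(I_{MN}+W\otimes I_M\big)x^{r-1}.$$ Equivalently, for every agent $i$ and all $r\ge 1$, $$x^{r+1}_i-x^r_i+\tfrac{1}{\beta_i}(\zeta^{r+1}_i-\zeta^r_i)=\tfrac{1}{\beta_i}\big(-\nabla g_i(x^r_i)+\nabla g_i(x^{r-1}_i)\big)+\frac{\sum_{j\in\mathcal N_i}\hat\rho_{ij}x^r_j+\frac{\omega_i}{2}x^r_i}{\sum_{j\in\mathcal N_i}\hat\rho_{ij}+\omega_i/2}-\frac12\Big(x^{r-1}_i+\frac{\sum_{j\in\mathcal N_i}\hat\rho_{ij}x^{r-1}_j+\frac{\omega_i}{2}x^{r-1}_i}{\sum_{j\in\mathcal N_i}\hat\rho_{ij}+\omega_i/2}\Big).$$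
   Context: Let $N,M\ge1$ and let $\mathcal G=(\mathcal V,\mathcal E)$ be a connected undirected graph with $\mathcal V=\{1,\dots,N\}$ and $E=|\mathcal E|$ edges. Let $\mathcal A$ be the set of $2E$ directed arcs containing both $(i,j)$ and $(j,i)$ for every edge $\{i,j\}\in\mathcal E$, and $\mathcal N_i=\{j:(i,j)\in\mathcal A\}$. For each $i$, $g_i:\mathbb R^M\to\mathbb R$ is convex and differentiable and $h_i:\mathbb R^M\to\mathbb R\cup\{+\infty\}$ is convex; $f_i=g_i+h_i$. Variables: $x=(x_1;\dots;x_N)\in\mathbb R^{NM}$, $z=(z_{ij})_{(i,j)\in\mathcal A}\in\mathbb R^{2EM}$ (arcs in a fixed order). Matrices $A_1,A_2\in\mathbb R^{2EM\times NM}$ consist of $2E\times N$ blocks of size $M\times M$: if $z_{ij}$ is the $q$-th block of $z$, then block $(q,i)$ of $A_1$ and block $(q,j)$ of $A_2$ equal $I_M$, all other blocks are zero. $A=[A_1;A_2]$, $B=[-I_{2EM};-I_{2EM}]$, $M_+=A_1^T+A_2^T$. $h(x)=\sum_i h_i(x_i)$, $G(x)=[\nabla g_1(x_1);\dots;\nabla g_N(x_N)]$. Parameters: $\rho_{ij}>0$ for each $(i,j)\in\mathcal A$, $\hat\rho_{ij}=(\rho_{ij}+\rho_{ji})/2$; $\Xi\in\mathbb R^{2E\times2E}$ diagonal with $\Xi[q,q]=\rho_{ij}$ if $z_{ij}$ is the $q$-th block of $z$; $\Gamma=\mathrm{blkdiag}(\Xi\otimes I_M,\Xi\otimes I_M)$;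 $\|v\|_S^2=v^TSv$. $\omega_i\ge0$, $\Omega=\mathrm{blkdiag}(\omega_1I_M,\dots,\omega_NI_M)$. $\beta_i=2(\sum_{j\in\mathcal N_i}\hat\rho_{ij}+\omega_i/2)$, $\Upsilon=\mathrm{diag}(\beta_1,\dots,\beta_N)\otimes I_M$. $W\in\mathbb R^{N\times N}$ is given by $W[i,j]=(\rho_{ij}+\rho_{ji})/\beta_i$ if $(i,j)\in\mathcal A$, $W[i,i]=\omega_i/\beta_i$, and $W[i,j]=0$ otherwise. Algorithm PGC: choose $x^0$, $\lambda^0\in\mathbb R^{4EM}$, $z^0$ with $B^T\lambda^0=0$ and $z^0=\frac12M_+^Tx^0$. For $r\ge0$: $x^{r+1}=\arg\min_x\{\langle G(x^r),x-x^r\rangle+h(x)+\langle\lambda^r,Ax+Bz^r\rangle+\frac12\|Ax+Bz^r\|_\Gamma^2+\frac12\|x-x^r\|_\Omega^2\}$; $z^{r+1}=\arg\min_z\frac12\|Ax^{r+1}+Bz+\Gamma^{-1}\lambda^r\|_\Gamma^2$; $\lambda^{r+1}=\lambda^r+\Gamma(Ax^{r+1}+Bz^{r+1})$. *)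

(* Defs.v *)
From HB Require Import structures.
From mathcomp Require Import all_boot all_order all_algebra.
From mathcomp Require Import all_classical all_reals all_analysis.
Set Implicit Arguments. Unset Strict Implicit. Unset Printing Implicit Defensive.
Import Order.TTheory GRing.Theory Num.Theory.
Import numFieldNormedType.Exports.
Local Open Scope ring_scope.

Section PGC.
Variables (R : realType) (N M : nat).

Notation blk := 'rV[R]_M.

Definition dotv (u v : blk) : R := (u *m v^T) 0 0.
Definition sqn (u : blk) : R := dotv u u.

Definition convex_real (g : blk -> R) : Prop :=
  forall (u v : blk) (t : R), 0 <= t <= 1 ->
    g (t *: u + (1 - t) *: v) <= t * g u + (1 - t) * g v.

Definition convex_ext (h : blk -> \bar R) : Prop :=
  forall (u v : blk) (t : R), 0 < t < 1 ->
    (h (t *: u + (1 - t) *: v)%R <= t%:E * h u + (1 - t)%:E * h v)%E.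

Definition proper_ext (h : blk -> \bar R) : Prop :=
  (forall u, h u != -oo%E) /\ (exists u, h u \is a fin_num).

Definition is_gradient (g : blk -> R) (dg : blk -> blk) : Prop :=
  forall u, differentiable g u /\ forall v, 'd g u v = dotv (dg u) v.

Definition subdiff (h : blk -> \bar R) (u zeta : blk) : Prop :=
  forall v, (h u + (dotv zeta (v - u)%R)%:E <= h v)%E.

Variable adj : rel 'I_N.

Definition simple_undirected_connected : Prop :=
  symmetric adj /\ irreflexive adj /\ forall i j, connect adj i j.

(* the set of directed arcs (i,j), both orientations of every edge *)
Definition darc := {p : 'I_N * 'I_N | adj p.1 p.2}.
Definition src (a : darc) : 'I_N := (val a).1.
Definition dst (a : darc) : 'I_N := (val a).2.

(* x in R^{NM} as N blocks; z in R^{2EM} as darc-indexed blocks;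
   lambda in R^{4EM} = (first 2E blocks, last 2E blocks) *)
Definition xvec := 'I_N -> blk.
Definition zvec := darc -> blk.
Definition lvec := (zvec * zvec)%type.

Definition ladd (u v : lvec) : lvec :=
  (fun a => u.1 a + v.1 a, fun a => u.2 a + v.2 a).
Definition Aop (x : xvec) : lvec := (fun a => x (src a), fun a => x (dst a)).
Definition Bop (z : zvec) : lvec := (fun a => - z a, fun a => - z a).
Definition BTop (l : lvec) : zvec := fun a => - l.1 a - l.2 a.
Definition MplusT (x : xvec) : zvec := fun a => x (src a) + x (dst a).
Definition ldot (u v : lvec) : R :=
  \sum_(a : darc) (dotv (u.1 a) (v.1 a) + dotv (u.2 a) (v.2 a)).

Variables (rho : 'I_N -> 'I_N -> R) (omega : 'I_N -> R).
Definition rho_arc (a : darc) : R := rho (src a) (dst a).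
Definition rhohat (i j : 'I_N) : R := (rho i j + rho j i) / 2.

Definition gnorm (v : lvec) : R :=
  \sum_(a : darc) rho_arc a * (sqn (v.1 a) + sqn (v.2 a)).
Definition Gam (v : lvec) : lvec :=
  (fun a => rho_arc a *: v.1 a, fun a => rho_arc a *: v.2 a).
Definition Gaminv (v : lvec) : lvec :=
  (fun a => (rho_arc a)^-1 *: v.1 a, fun a => (rho_arc a)^-1 *: v.2 a).
Definition onorm (x : xvec) : R := \sum_(i < N) omega i * sqn (x i).

Definition beta (i : 'I_N) : R :=
  2 * (\sum_(j < N | adj i j) rhohat i j + omega i / 2).

Definition Wmx : 'M[R]_N :=
  \matrix_(i, j) (if adj i j then (rho i j + rho j i) / beta i
                  else if i == j then omega i / beta i else 0).

Variables (g : 'I_N -> blk -> R) (dg : 'I_N -> blk -> blk)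
          (h : 'I_N -> blk -> \bar R).

Definition Gdot (xr y : xvec) : R := \sum_(i < N) dotv (dg i (xr i)) (y i - xr i).
Definition hsum (y : xvec) : \bar R := (\sum_(i < N) h i (y i))%E.

Definition xobj (xr : xvec) (zr : zvec) (lr : lvec) (y : xvec) : \bar R :=
  ((Gdot xr y + ldot lr (ladd (Aop y) (Bop zr))
    + 2^-1 * gnorm (ladd (Aop y) (Bop zr))
    + 2^-1 * onorm (fun i => y i - xr i))%:E + hsum y)%E.

Definition zobj (xn : xvec) (lr : lvec) (w : zvec) : R :=
  2^-1 * gnorm (ladd (ladd (Aop xn) (Bop w)) (Gaminv lr)).

Definition PGC_run (x : nat -> xvec) (z : nat -> zvec) (l : nat -> lvec) : Prop :=
  [/\ (forall a, BTop (l 0%N) a = 0),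
      (forall a, z 0%N a = 2^-1 *: MplusT (x 0%N) a)
    & forall r : nat,
      [/\ (forall y, (xobj (x r) (z r) (l r) (x r.+1) <= xobj (x r) (z r) (l r) y)%E),
          (forall w, zobj (x r.+1) (l r) (z r.+1) <= zobj (x r.+1) (l r) w)
        & l r.+1 = ladd (l r) (Gam (ladd (Aop (x r.+1)) (Bop (z r.+1))))]].

End PGC.

(* Main.v *)
Require Import Defs.
From HB Require Import structures.
From mathcomp Require Import all_boot all_order all_algebra.
From mathcomp Require Import all_classical all_reals all_analysis.
From mathcomp Require Import ring lra.
Import Order.TTheory GRing.Theory Num.Theory.
Local Open Scope ring_scope.

Module PGCHelpers.
Set Implicit Arguments. Unset Strict Implicit.

Lemma sum_darc N (adj : rel 'I_N) (V : nmodType) (F : 'I_N * 'I_N -> V) :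
  \sum_(a : darc adj) F (val a) = \sum_(p | adj p.1 p.2) F p.
Proof.
rewrite [RHS](reindex_omap (val : darc adj -> _) insub); last first.
  by move=> p Pp; rewrite insubT.
by apply: eq_bigl=> -[p Pp] /=; rewrite Pp insubT /= eqxx.
Qed.

Lemma sum_src N (adj : rel 'I_N) (V : nmodType) (i : 'I_N) (F : 'I_N -> 'I_N -> V) :
  \sum_(a : darc adj) (if src a == i then F (src a) (dst a) else 0)
  = \sum_(j | adj i j) F i j.
Proof.
rewrite (@sum_darc N adj V (fun p => if p.1 == i then F p.1 p.2 else 0)).
rewrite -(pair_big_dep xpredT adj (fun a b => if a == i then F a b else 0)) /=.
rewrite (bigD1 i) //= [X in _ + X]big1 ?addr0; last first.
  by move=> a Ha; apply: big1 => j _; rewrite (negbTE Ha).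
by apply: eq_bigr => j _; rewrite eqxx.
Qed.

Lemma sum_dst N (adj : rel 'I_N) (V : nmodType) (i : 'I_N) (F : 'I_N -> 'I_N -> V) :
  \sum_(a : darc adj) (if dst a == i then F (src a) (dst a) else 0)
  = \sum_(j | adj j i) F j i.
Proof.
rewrite (@sum_darc N adj V (fun p => if p.2 == i then F p.1 p.2 else 0)).
rewrite -(pair_big_dep xpredT adj (fun a b => if b == i then F a b else 0)) /=.
rewrite [RHS]big_mkcond; apply: eq_bigr => a _.
rewrite big_mkcond (bigD1 i) //= [X in _ + X]big1 ?addr0; last first.
  by move=> b Hb; rewrite (negbTE Hb); case: ifP.
by rewrite eqxx.
Qed.


Lemma dotvE (R : realType) M (u v : 'rV[R]_M) : dotv u v = \sum_k u 0 k * v 0 k.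
Proof. by rewrite /dotv !mxE; apply: eq_bigr => k _; rewrite mxE. Qed.

Lemma dotvC (R : realType) M (u v : 'rV[R]_M) : dotv u v = dotv v u.
Proof. by rewrite !dotvE; apply: eq_bigr => k _; rewrite mulrC. Qed.

Lemma dotvDl (R : realType) M (u v w : 'rV[R]_M) : dotv (u + v) w = dotv u w + dotv v w.
Proof. by rewrite !dotvE -big_split; apply: eq_bigr => k _; rewrite mxE mulrDl. Qed.

Lemma dotvZl (R : realType) M a (u w : 'rV[R]_M) : dotv (a *: u) w = a * dotv u w.
Proof. by rewrite !dotvE mulr_sumr; apply: eq_bigr => k _; rewrite mxE mulrA. Qed.

Lemma dotvNl (R : realType) M (u w : 'rV[R]_M) : dotv (- u) w = - dotv u w.
Proof. by rewrite !dotvE -sumrN; apply: eq_bigr => k _; rewrite mxE mulNr. Qed.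

Lemma dotvDr (R : realType) M (u v w : 'rV[R]_M) : dotv w (u + v) = dotv w u + dotv w v.
Proof. by rewrite !(dotvC w) dotvDl. Qed.

Lemma dotvZr (R : realType) M a (u w : 'rV[R]_M) : dotv w (a *: u) = a * dotv w u.
Proof. by rewrite !(dotvC w) dotvZl. Qed.

Lemma dotvNr (R : realType) M (u w : 'rV[R]_M) : dotv w (- u) = - dotv w u.
Proof. by rewrite !(dotvC w) dotvNl. Qed.

Lemma dotv0l (R : realType) M (w : 'rV[R]_M) : dotv 0 w = 0.
Proof. by rewrite dotvE big1 // => k _; rewrite mxE mul0r. Qed.

Lemma dotv_suml (R : realType) M (I : finType) (f : I -> 'rV[R]_M) w :
  dotv (\sum_a f a) w = \sum_a dotv (f a) w.
Proof.
rewrite dotvE; under eq_bigr do rewrite summxE mulr_suml.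
rewrite exchange_big /=; apply: eq_bigr => a _; by rewrite dotvE.
Qed.

Lemma sqn_ge0 (R : realType) M (u : 'rV[R]_M) : 0 <= sqn u.
Proof. by rewrite /sqn dotvE sumr_ge0 // => k _; rewrite -expr2 sqr_ge0. Qed.

Lemma sqn_eq0 (R : realType) M (u : 'rV[R]_M) : sqn u = 0 -> u = 0.
Proof.
rewrite /sqn dotvE => /eqP; rewrite psumr_eq0 => [/allP H|k _]; last by rewrite -expr2 sqr_ge0.
apply/rowP => k; rewrite mxE; apply/eqP; rewrite -sqrf_eq0 expr2.
by apply: (H k); rewrite mem_index_enum.
Qed.

Ltac dsimp := rewrite /sqn ?(dotvDl, dotvDr, dotvNl, dotvNr, dotvZl, dotvZr).


Lemma z_step (R : realType) N M (adj : rel 'I_N) (rho : 'I_N -> 'I_N -> R)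
  (xn : 'I_N -> 'rV[R]_M) (lr : lvec R M adj) (zn : zvec R M adj) :
  (forall i j, adj i j -> 0 < rho i j) ->
  (forall w, zobj rho xn lr zn <= zobj rho xn lr w) ->
  forall a, zn a = 2^-1 *: (xn (src a) + xn (dst a)
                     + (rho_arc rho a)^-1 *: (lr.1 a + lr.2 a)).
Proof.
move=> Hrho Hmin a.
set m := 2^-1 *: _.
have Hra : 0 < rho_arc rho a by apply: Hrho; exact: (valP a).
set w := fun b => if b == a then m else zn b.
pose T (v : zvec R M adj) b := rho_arc rho b * (sqn (xn (src b) + - v b + (rho_arc rho b)^-1 *: lr.1 b)
   + sqn (xn (dst b) + - v b + (rho_arc rho b)^-1 *: lr.2 b)).
have ZE : forall v, zobj rho xn lr v = 2^-1 * \sum_b T v b by [].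
have := Hmin w; rewrite !ZE (bigD1 a) //= [X in _ <= _ * X](bigD1 a) //=.
rewrite [X in _ <= _ * (_ + X)](eq_bigr (T zn)); last first.
  by move=> b Hb; rewrite /T /w (negbTE Hb).
rewrite ler_pM2l ?invr_gt0 ?ltr0n // lerD2r /T /w eqxx ler_pM2l //= => H.
apply/eqP; rewrite -subr_eq0; apply/eqP; apply: sqn_eq0.
apply/eqP; rewrite eq_le sqn_ge0 andbT.
set p := xn (src a) + (rho_arc rho a)^-1 *: lr.1 a.
set q := xn (dst a) + (rho_arc rho a)^-1 *: lr.2 a.
have E : forall v : 'rV[R]_M, sqn (xn (src a) + - v + (rho_arc rho a)^-1 *: lr.1 a)
   + sqn (xn (dst a) + - v + (rho_arc rho a)^-1 *: lr.2 a)
   = 2 * sqn (v - m) + (sqn (p - m) + sqn (q - m)).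
  move=> v; rewrite /sqn !dotvE.
  rewrite mulr_sumr -!big_split /=; apply: eq_bigr => k _.
  by rewrite /m /p /q !mxE; move: (rho_arc rho a)^-1 => rr; field.
move: H; rewrite !E subrr /sqn dotv0l mulr0 lerD2r; lra.
Qed.


Ltac sumify := rewrite /sqn ?dotvE; do 4 rewrite ?mulr_sumr -?sumrN -?big_split /=;
  apply: eq_bigr => ? _; rewrite ?mxE.

Lemma Phi_upd (R : realType) N M (adj : rel 'I_N) (rho : 'I_N -> 'I_N -> R)
  (omega : 'I_N -> R) (dg : 'I_N -> 'rV[R]_M -> 'rV[R]_M)
  (xr y : 'I_N -> 'rV[R]_M) (zr : zvec R M adj) (lr : lvec R M adj)
  (i : 'I_N) (t : R) (d : 'rV[R]_M) :
  let Phi y' := Gdot dg xr y' + ldot lr (ladd (Aop adj y') (Bop zr))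
      + 2^-1 * Defs.gnorm rho (ladd (Aop adj y') (Bop zr))
      + 2^-1 * onorm omega (fun k => y' k - xr k) in
  let ga (a : darc adj) := (if src a == i then lr.1 a + rho_arc rho a *: (y i - zr a) else 0)
            + (if dst a == i then lr.2 a + rho_arc rho a *: (y i - zr a) else 0) in
  let ka (a : darc adj) := 2^-1 * rho_arc rho a * ((if src a == i then sqn d else 0)
            + (if dst a == i then sqn d else 0)) in
  let upd := fun k => if k == i then y i + t *: d else y k in
  Phi upd = Phi y + t * dotv (dg i (xr i) + omega i *: (y i - xr i) + \sum_a ga a) d
            + t ^+ 2 * (2^-1 * omega i * sqn d + \sum_a ka a).
Proof.
move=> Phi ga ka upd.
pose psi k (u : 'rV[R]_M) := dotv (dg k (xr k)) (u - xr k) + 2^-1 * (omega k * sqn (u - xr k)).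
pose phi (a : darc adj) (u v : 'rV[R]_M) := (dotv (lr.1 a) (u + - zr a) + dotv (lr.2 a) (v + - zr a))
     + 2^-1 * (rho_arc rho a * (sqn (u + - zr a) + sqn (v + - zr a))).
have PE : forall y', Phi y' = \sum_k psi k (y' k) + \sum_a phi a (y' (src a)) (y' (dst a)).
  move=> y'; rewrite /Phi /Gdot /ldot /Defs.gnorm /onorm /psi /phi !mulr_sumr !big_split /=.
  lra.
have Hpsi : psi i (y i + t *: d) = psi i (y i) + t * dotv (dg i (xr i) + omega i *: (y i - xr i)) d
    + t ^+ 2 * (2^-1 * omega i * sqn d).
  rewrite /psi; sumify; by field.
have Hphi : forall a, phi a (upd (src a)) (upd (dst a)) = phi a (y (src a)) (y (dst a))
    + (t * dotv (ga a) d + t ^+ 2 * ka a).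
  move=> a; rewrite /phi /upd /ga /ka.
  case: eqP => [Hs|Hs]; case: eqP => [Hd|Hd]; rewrite ?Hs ?Hd ?addr0 ?add0r ?dotv0l ?mulr0 ?mul0r ?addr0; sumify; by field.

rewrite !PE (bigD1 i) //= [X in _ = X + _ + _ + _](bigD1 i) //= /upd eqxx Hpsi.

rewrite (eq_bigr (fun a => phi a (y (src a)) (y (dst a)) + (t * dotv (ga a) d + t ^+ 2 * ka a))); last first.
  by move=> a _; rewrite -Hphi.
rewrite [X in _ + X + _ = _](eq_bigr (fun k => psi k (y k))); last by move=> k /negbTE ->.
rewrite [\sum_a (phi _ _ _ + _)]big_split /= [\sum_a (t * _ + _)]big_split /=.
rewrite -!mulr_sumr -dotv_suml !dotvDl.
lra.
Qed.

Lemma le_lim (R : realType) (A B K : R) : 0 <= K ->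
  (forall t, 0 < t < 1 -> A <= B + t * K) -> A <= B.
Proof.
move=> K0 H; apply/ler_addgt0Pr => e e0.
have D : 0 < e + K + 1 by lra.
pose t := e / (e + K + 1).
have Ht0 : 0 < t by rewrite divr_gt0.
have Ht1 : t < 1 by rewrite ltr_pdivrMr // mul1r; lra.
have HtK : t * K <= e by rewrite mulrAC ler_pdivrMr //; nra.
have := H t; rewrite Ht0 Ht1 => /(_ isT); lra.
Qed.

Lemma x_step (R : realType) N M (adj : rel 'I_N) (rho : 'I_N -> 'I_N -> R)
  (omega : 'I_N -> R) (dg : 'I_N -> 'rV[R]_M -> 'rV[R]_M) (h : 'I_N -> 'rV[R]_M -> \bar R)
  (xr y : 'I_N -> 'rV[R]_M) (zr : zvec R M adj) (lr : lvec R M adj) :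
  (forall i j, adj i j -> 0 < rho i j) -> (forall i, 0 <= omega i) ->
  (forall i, convex_ext (h i) /\ proper_ext (h i)) ->
  (forall y', (xobj rho omega dg h xr zr lr y <= xobj rho omega dg h xr zr lr y')%E) ->
  forall i, subdiff (h i) (y i) (- (dg i (xr i) + omega i *: (y i - xr i) + \sum_(a : darc adj)
     ((if src a == i then lr.1 a + rho_arc rho a *: (y i - zr a) else 0)
            + (if dst a == i then lr.2 a + rho_arc rho a *: (y i - zr a) else 0)))).
Proof.
move=> Hrho Hom Hh Hmin i.
pose Phi y' := Gdot dg xr y' + ldot lr (ladd (Aop adj y') (Bop zr))
      + 2^-1 * Defs.gnorm rho (ladd (Aop adj y') (Bop zr))
      + 2^-1 * onorm omega (fun k => y' k - xr k).
have XE : forall y', xobj rho omega dg h xr zr lr y' = ((Phi y')%:E + hsum h y')%E by [].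
have /choice [u0 Hu0] : forall k, exists u, h k u \is a fin_num.
  by move=> k; case: (Hh k) => _ [_ ?].
have Hs0 : hsum h u0 \is a fin_num by apply/sum_fin_numP => k _ _; exact: Hu0.
have Hy : hsum h y \is a fin_num.
  have Hle := Hmin u0; rewrite !XE in Hle.
  rewrite fin_numE; apply/andP; split.
    rewrite /hsum; apply: (big_ind (fun x => x != -oo)%E) => //.
      by move=> a b Ha Hb; rewrite adde_eq_ninfty negb_or Ha Hb.
    by move=> k _; case: (Hh k) => _ [H _]; exact: H.
  apply/negP => /eqP Hinf; rewrite Hinf addey // in Hle.
  by move: Hle; rewrite -(fineK Hs0) -EFinD leye_eq.
have Hfk : forall k, h k (y k) \is a fin_num.
  by move/sum_fin_numP: Hy => Hy k; apply: Hy; rewrite ?mem_index_enum.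
move=> v.
case Ev: (h i v) => [hv| |]; last 2 first.
- by rewrite leey.
- by case: (Hh i) => _ [/(_ v)]; rewrite Ev.
rewrite -(fineK (Hfk i)) -EFinD lee_fin dotvNl.
set a := fine (h i (y i)).
have HK : 0 <= 2^-1 * omega i * sqn (v - y i) + \sum_(a : darc adj) 2^-1 * rho_arc rho a
     * ((if src a == i then sqn (v - y i) else 0) + (if dst a == i then sqn (v - y i) else 0)).
  apply: addr_ge0.
    by apply: mulr_ge0; [apply: mulr_ge0 => //; rewrite invr_ge0 ler0n | exact: sqn_ge0].
  apply: sumr_ge0 => b _; apply: mulr_ge0.
    by apply: mulr_ge0; [rewrite invr_ge0 ler0n | apply/ltW/Hrho; exact: (valP b)].
  by apply: addr_ge0; case: ifP => _ //; exact: sqn_ge0.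
suff: a - hv <= dotv (dg i (xr i) + omega i *: (y i - xr i) + \sum_(a : darc adj)
     ((if src a == i then lr.1 a + rho_arc rho a *: (y i - zr a) else 0)
            + (if dst a == i then lr.2 a + rho_arc rho a *: (y i - zr a) else 0))) (v - y i) by lra.
apply: (le_lim HK) => t /andP[t0 t1].
pose w := y i + t *: (v - y i).
pose upd := fun k => if k == i then w else y k.
have Hm := Hmin upd; rewrite !XE in Hm.
have PU := Phi_upd rho omega dg xr y zr lr i t (v - y i).
rewrite /= in PU.
have HU : hsum h upd = (h i w + \sum_(k < N | k != i) h k (y k))%E.
  rewrite /hsum (bigD1 i) //= {1}/upd eqxx; congr (_ + _)%E.
  by apply: eq_bigr => k /negbTE Hk; rewrite /upd Hk.
have HY : hsum h y = (h i (y i) + \sum_(k < N | k != i) h k (y k))%E by rewrite /hsum (bigD1 i).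
have HS : (\sum_(k < N | k != i) h k (y k))%E = (\sum_(k < N | k != i) fine (h k (y k)))%:E.
  by rewrite EFin_sum_fine // => k _; exact: Hfk.
have Hc := (Hh i).1 v (y i) t; rewrite t0 t1 in Hc; have {}Hc := Hc isT.
have Ew : t *: v + (1 - t) *: y i = w by apply/rowP => k; rewrite /w !mxE; ring.
rewrite Ew Ev -(fineK (Hfk i)) -!EFinM -EFinD in Hc.
have Hwf : h i w \is a fin_num.
  rewrite fin_numE; apply/andP; split; first by case: (Hh i) => _ [H _]; exact: H.
  by apply/negP => /eqP E; rewrite E leye_eq in Hc.
rewrite -(fineK Hwf) lee_fin in Hc.
rewrite HU HY HS -(fineK (Hfk i)) -(fineK Hwf) -!EFinD lee_fin in Hm.
rewrite /Phi /upd /w PU -/a in Hm.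
rewrite /w -/a in Hc.
set D := dotv _ (v - y i) in Hm *.
set K := (2^-1 * omega i * sqn (v - y i) + _) in Hm HK *.
set c := fine _ in Hm Hc.
have : t * (a - hv - (D + t * K)) <= 0 by nra.
by rewrite pmulr_rle0 // subr_le0.
Qed.


Lemma beta_eq (R : realType) N (adj : rel 'I_N) (rho : 'I_N -> 'I_N -> R) (omega : 'I_N -> R) i :
  beta adj rho omega i = \sum_(j | adj i j) (rho i j + rho j i) + omega i.
Proof.
rewrite /beta /rhohat mulrDr mulr_sumr; congr (_ + _).
  by apply: eq_bigr => j _; field.
by field.
Qed.

Lemma Wsum (R : realType) N M (adj : rel 'I_N) (rho : 'I_N -> 'I_N -> R) (omega : 'I_N -> R)
  (u : 'I_N -> 'rV[R]_M) i : irreflexive adj ->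
  \sum_j Wmx adj rho omega i j *: u j = (beta adj rho omega i)^-1 *:
    (\sum_(j | adj i j) (rho i j + rho j i) *: u j + omega i *: u i).
Proof.
move=> Hirr.
rewrite scalerDr scaler_sumr big_mkcond /=.
rewrite (eq_bigr (fun j => (if adj i j then (beta adj rho omega i)^-1 *: ((rho i j + rho j i) *: u j) else 0)
   + (if j == i then (beta adj rho omega i)^-1 *: (omega i *: u j) else 0))); last first.
  move=> j _; rewrite mxE; case: ifP => Ha.
    have Hne : (j == i) = false by apply/negP => /eqP E; move: Ha; rewrite E Hirr.
    by rewrite Hne addr0 scalerA mulrC.
  rewrite add0r eq_sym; case: eqP => [->|_]; [by rewrite scalerA mulrC | by rewrite scale0r].
by rewrite big_split /= -!big_mkcond big_pred1_eq.
Qed.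

End PGCHelpers.
Import PGCHelpers.

Theorem proposition3p1 (R : realType) (N M : nat) (adj : rel 'I_N)
  (rho : 'I_N -> 'I_N -> R) (omega : 'I_N -> R)
  (g : 'I_N -> 'rV[R]_M -> R) (dg : 'I_N -> 'rV[R]_M -> 'rV[R]_M)
  (h : 'I_N -> 'rV[R]_M -> \bar R)
  (x : nat -> 'I_N -> 'rV[R]_M) (z : nat -> darc adj -> 'rV[R]_M)
  (l : nat -> lvec R M adj) :
  (0 < N)%N -> (0 < M)%N ->
  simple_undirected_connected adj ->
  (forall i j, adj i j -> 0 < rho i j) ->
  (forall i, 0 <= omega i) ->
  (forall i, 0 < beta adj rho omega i) ->
  (forall i, convex_real (g i) /\ is_gradient (g i) (dg i)) ->
  (forall i, convex_ext (h i) /\ proper_ext (h i)) ->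
  PGC_run rho omega dg h x z l ->
  exists zeta : nat -> 'I_N -> 'rV[R]_M,
    (forall r, (1 <= r)%N -> forall i, subdiff (h i) (x r i) (zeta r i)) /\
    (forall r, (1 <= r)%N -> forall i : 'I_N,
       x r.+1 i - x r i + (beta adj rho omega i)^-1 *: (zeta r.+1 i - zeta r i)
       = (beta adj rho omega i)^-1 *: (- dg i (x r i) + dg i (x r.-1 i))
         + \sum_(j < N) Wmx adj rho omega i j *: x r j
         - 2^-1 *: (x r.-1 i + \sum_(j < N) Wmx adj rho omega i j *: x r.-1 j)).
Proof.
move=> _ _ [Hsym [Hirr _]] Hrho Hom Hbeta _ Hh [H0l H0z Hstep].
have Hra : forall a : darc adj, 0 < rho_arc rho a by move=> a; apply: Hrho; exact: (valP a).
have Lz : forall r a, z r.+1 a = 2^-1 *: (x r.+1 (src a) + x r.+1 (dst a)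
                     + (rho_arc rho a)^-1 *: ((l r).1 a + (l r).2 a)).
  by move=> r; case: (Hstep r) => _ Hz _; apply: z_step.
have Lsum : forall r a, (l r).1 a + (l r).2 a = 0.
  case=> [|r] a.
    by move: (H0l a); rewrite /BTop => /eqP; rewrite -opprD oppr_eq0 => /eqP.
  case: (Hstep r) => _ _ ->; rewrite /= Lz.
  have Hr0 : rho_arc rho a != 0 by rewrite gt_eqF.
  apply/rowP => k; rewrite !mxE.
  by move: (rho_arc rho a) Hr0 => rr Hr0; field.
have Lzz : forall r a, z r a = 2^-1 *: (x r (src a) + x r (dst a)).
  case=> [|r] a; first by rewrite H0z /MplusT.
  by rewrite Lz Lsum scaler0 addr0.
have Ll : forall r a, (l r.+1).1 a = (l r).1 a + rho_arc rho a *: (2^-1 *: (x r.+1 (src a) - x r.+1 (dst a))).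
  move=> r a; case: (Hstep r) => _ _ ->; rewrite /= Lzz.
  by apply/rowP => k; rewrite !mxE; field.
have Ll2 : forall r a, (l r).2 a = - (l r).1 a.
  by move=> r a; apply/eqP; rewrite -addr_eq0 addrC Lsum.
pose G r i := dg i (x r i) + omega i *: (x r.+1 i - x r i) + \sum_(a : darc adj)
     ((if src a == i then (l r).1 a + rho_arc rho a *: (x r.+1 i - z r a) else 0)
            + (if dst a == i then (l r).2 a + rho_arc rho a *: (x r.+1 i - z r a) else 0)).
exists (fun r i => if r is r'.+1 then - G r' i else 0).
split.
  case=> // r _ i /=; case: (Hstep r) => Hx _ _.
  exact: (x_step Hrho Hom Hh Hx i).
case=> // q _ i /=.
pose E j := x q.+2 i - x q.+1 i - x q.+1 j + 2^-1 *: (x q i + x q j).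
have HS : \sum_(a : darc adj)
     ((if src a == i then (l q.+1).1 a + rho_arc rho a *: (x q.+2 i - z q.+1 a) else 0)
            + (if dst a == i then (l q.+1).2 a + rho_arc rho a *: (x q.+2 i - z q.+1 a) else 0))
   - \sum_(a : darc adj)
     ((if src a == i then (l q).1 a + rho_arc rho a *: (x q.+1 i - z q a) else 0)
            + (if dst a == i then (l q).2 a + rho_arc rho a *: (x q.+1 i - z q a) else 0))
   = \sum_(j | adj i j) (rho i j + rho j i) *: E j.
  rewrite -sumrB.
  rewrite (eq_bigr (fun a => (if src a == i then rho (src a) (dst a) *: E (dst a) else 0)
        + (if dst a == i then rho (src a) (dst a) *: E (src a) else 0))); last first.
    move=> a _; rewrite !Ll2 !Ll !Lzz /E /rho_arc.
    case: eqP => [Hs|_]; case: eqP => [Hd|_]; rewrite ?Hs ?Hd;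
      by apply/rowP => k; rewrite !(mxE, summxE); field.
  rewrite big_split /= (@sum_src N adj _ i (fun p q => rho p q *: E q)) (@sum_dst N adj _ i (fun p q => rho p q *: E p)).
  rewrite [X in _ + X = _](eq_bigl (fun j => adj i j)) => [|j]; last by rewrite Hsym.
  by rewrite -big_split; apply: eq_bigr => j _; rewrite scalerDl.
have HE : \sum_(j | adj i j) (rho i j + rho j i) *: E j
   = (\sum_(j | adj i j) (rho i j + rho j i)) *: (x q.+2 i - x q.+1 i + 2^-1 *: x q i)
     - \sum_(j | adj i j) (rho i j + rho j i) *: x q.+1 j
     + 2^-1 *: \sum_(j | adj i j) (rho i j + rho j i) *: x q j.
  rewrite scaler_suml scaler_sumr -sumrB -big_split /=; apply: eq_bigr => j _.
  by apply/rowP => k; rewrite /E !mxE; ring.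
have -> : - G q.+1 i - - G q i = - (G q.+1 i - G q i) by rewrite opprB opprK addrC.
have HG : G q.+1 i - G q i = dg i (x q.+1 i) - dg i (x q i)
    + (omega i *: (x q.+2 i - x q.+1 i) - omega i *: (x q.+1 i - x q i))
    + \sum_(j | adj i j) (rho i j + rho j i) *: E j.
  rewrite -HS /G.
  set S1 := \sum_(a : darc adj) _.
  set S0 := \sum_(a : darc adj) _.
  by apply/rowP => k; rewrite !mxE; ring.
rewrite HG HE !Wsum //.
have Cb := beta_eq adj rho omega i.
have Hb := Hbeta i.
move: Cb Hb.
set b := beta adj rho omega i.
set C := \sum_(j | adj i j) (rho i j + rho j i).
set S1 := \sum_(j | adj i j) _ *: x q.+1 j.
set S2 := \sum_(j | adj i j) _ *: x q j.
move=> Cb Hb.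
have Hb0 : b != 0 by rewrite gt_eqF.
have -> : C = b - omega i by rewrite Cb addrK.
apply/rowP => k; rewrite !mxE.
move: b Hb0 {Hb Cb} => b Hb0.
by field.
Qed.
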